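(* Let $X_1, X_2, \dots$ be i.i.d. $N(\mu, \sigma^2)$ with $\sigma^2>0$, and for $j\ge1$ let $\bar X_j = \frac1j\sum_{t=1}^j X_t$ and $S(j) = \sqrt{\frac1j\sum_{t=1}^j (X_t - \bar X_j)^2}$. Then for every $\epsilon > 0$, $$\frac{ \mathbb{P}\left( \bar X_j + S(j)\sqrt{k^{2/j} - 1} < \mu - \epsilon \text{ for some } 2 \leq j \leq k \right) }{ 1/k } \to \infty \quad \text{as } k \to \infty.$$ In particular, the probability on the left is not $o(1/k)$. *)

(* Defs.v *)
From HB Require Import structures.
From mathcomp Require Import all_boot all_order all_algebra.
From mathcomp Require Import all_classical all_reals all_analysis.
Set Implicit Arguments. Unset Strict Implicit. Unset Printing Implicit Defensive.
Import Order.TTheory GRing.Theory Num.Theory.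
Import numFieldNormedType.Exports.
Local Open Scope classical_set_scope.
Local Open Scope ring_scope.

Definition mutually_independent {R : realType} {d : measure_display}
  {T : measurableType d} (P : probability T R) (X : nat -> {RV P >-> R}) :=
  forall (s : seq nat) (A : nat -> set R), uniq s ->
    (forall i, measurable (A i)) ->
    P (\bigcap_(i in [set` s]) (X i @^-1` A i)) =
    (\prod_(i <- s) P (X i @^-1` A i))%E.

(* X_i ~ N(mu, sigma^2), sigma the standard deviation *)
Definition has_normal_law {R : realType} {d : measure_display}
  {T : measurableType d} (P : probability T R) (Y : {RV P >-> R}) (mu sigma : R) :=
  forall A : set R, measurable A -> P (Y @^-1` A) = normal_prob mu sigma A.

(* Indexing: X 0, X 1, ... stand for the paper's X_1, X_2, ...
   sample_mean X j x = (1/j) sum_{t=1}^j X_t(x) *)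
Definition sample_mean {R : realType} {d : measure_display}
  {T : measurableType d} (P : probability T R) (X : nat -> {RV P >-> R})
  (j : nat) (x : T) : R :=
  (j%:R)^-1 * \sum_(t < j) X t x.

Definition sample_sd {R : realType} {d : measure_display}
  {T : measurableType d} (P : probability T R) (X : nat -> {RV P >-> R})
  (j : nat) (x : T) : R :=
  Num.sqrt ((j%:R)^-1 * \sum_(t < j) (X t x - sample_mean X j x) ^+ 2).

(* Main.v *)
Require Import Defs.
From HB Require Import structures.
From mathcomp Require Import all_boot all_order all_algebra.
From mathcomp Require Import all_classical all_reals all_analysis.
From mathcomp Require Import ring lra.
Import Order.TTheory GRing.Theory Num.Theory.
Import numFieldNormedType.Exports.
Local Open Scope classical_set_scope.
Local Open Scope ring_scope.

Lemma normal_lb (R : realType) (m s u δ B : R) : s != 0 -> 0 <= δ ->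
  (forall x : R, (u <= x <= u + δ)%R -> (`|x - m| <= B)%R) ->
  ((normal_peak s * expR (- B ^+ 2 / (s ^+ 2 *+ 2)) * δ)%:E
     <= normal_prob m s `[u, (u + δ)%R[)%E.
Proof.
move=> s0 d0 hB.
set c := normal_peak s * _.
have c0 : 0 <= c by rewrite mulr_ge0 ?normal_peak_ge0 ?expR_ge0.
have -> : (c * δ)%:E = (\int[lebesgue_measure]_(x in `[u, (u + δ)%R[) (cst c%:E) x)%E.
  rewrite integral_cst //= lebesgue_measure_itv /=.
  have [ud|ud] := ltP u (u + δ).
    by rewrite lte_fin ud -EFinD -EFinM addrAC subrr add0r.
  have -> : δ = 0 by lra.
  by rewrite mulr0 addr0 ltxx mule0.
rewrite /normal_prob; eapply ge0_le_integral; try done.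
- apply/measurable_realfun.measurable_EFinP; apply: measurable_funTS.
  exact: measurable_normal_pdf.
- move=> x /=; rewrite in_itv /= => /andP[h1 h2].
  rewrite lee_fin /normal_pdf (negbTE s0) /c ler_wpM2l ?normal_peak_ge0 //.
  rewrite /normal_fun ler_expR !mulNr lerN2 ler_wpM2r //.
    by rewrite invr_ge0 mulrn_wge0 // sqr_ge0.
  have := hB x; rewrite h1 (ltW h2) => /(_ isT).
  rewrite -[(x - m) ^+ 2]real_normK ?num_real // => hx.
  by rewrite ler_sqr ?nnegrE ?(le_trans _ hx).
Qed.

Section helpers.
Context (R : realType) (d : measure_display) (T : measurableType d)
  (P : probability T R) (X : nat -> {RV P >-> R}).

Lemma mfun_mean j : measurable_fun setT (sample_mean X j).
Proof.
apply: measurable_realfun.measurable_funM => //; apply: measurable_sum => t //.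
Qed.

Lemma mfun_sd j : measurable_fun setT (sample_sd X j).
Proof.
apply: measurableT_comp; first exact: measurable_realfun.continuous_measurable_fun (@sqrt_continuous R).
apply: measurable_realfun.measurable_funM => //; apply: measurable_sum => t.
apply: measurable_realfun.measurable_funX; apply: measurable_realfun.measurable_funB => //; exact: mfun_mean.
Qed.

Lemma mE (k : nat) (c : R) (r : nat -> R) :
  measurable [set x | exists j : nat, (2 <= j <= k)%N /\
            (sample_mean X j x + sample_sd X j x * r j < c)%R].
Proof.
rewrite (_ : [set x | _] = \bigcup_j [set x | (2 <= j <= k)%N /\
            (sample_mean X j x + sample_sd X j x * r j < c)%R]); last first.
  by apply/seteqP; split => x /= [j] ?; [exists j|exists j].
apply: bigcupT_measurable => j.
have [jk|jk] := boolP (2 <= j <= k)%N; last first.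
  rewrite (_ : [set x | _] = set0) //; apply/seteqP; split => x // [] //.
pose g := fun x => sample_mean X j x + sample_sd X j x * r j < c.
have mg : measurable_fun setT g.
  apply: measurable_realfun.measurable_fun_ltr => //.
  apply: measurable_realfun.measurable_funD; first exact: mfun_mean.
  by apply: measurable_realfun.measurable_funM => //; exact: mfun_sd.
have := mg measurableT [set true] I.
move=> h; apply: (eq_ind _ (fun S => measurable S) h); apply/seteqP; split => x /=; rewrite /g; [case=> _ ->|case=> _ ->] => //.
Qed.

Lemma indep2 (A B : set R) : measurable A -> measurable B ->
  mutually_independent X ->
  P (X 0%N @^-1` A `&` X 1%N @^-1` B) = (P (X 0%N @^-1` A) * P (X 1%N @^-1` B))%E.
Proof.
move=> mA mB /(_ [:: 0%N; 1%N] (fun i => if i == 0%N then A else B) erefl).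
have hm : forall i, measurable (if i == 0%N then A else B) by move=> i; case: ifP.
move=> /(_ hm).
rewrite !big_cons big_nil mule1 /= => <-; congr (P _).
apply/seteqP; split => x /=.
  move=> [h0 h1] i /=; rewrite !inE => /orP[/eqP->//|/eqP->//].
by move=> h; split; [apply: (h 0%N)|apply: (h 1%N)]; rewrite /= !inE.
Qed.

Lemma lbk (mu sigma eps : R) (k : nat) : 0 < sigma -> mutually_independent X ->
  (forall n, has_normal_law (X n) mu sigma) -> 0 < eps -> (2 <= k)%N ->
  (((normal_peak sigma * expR (- (eps + 3) ^+ 2 / (sigma ^+ 2 *+ 2))) ^+ 2
     / (Num.truncn (Num.sqrt (k%:R : R))).+1%:R)%R%:E <=
  P [set x | exists j : nat, (2 <= j <= k)%N /\
            (sample_mean X j x + sample_sd X j x *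
              Num.sqrt ((k%:R) `^ (2 / j%:R) - 1) < mu - eps)%R])%E.
Proof.
move=> sig0 indep hnorm eps0 k2.
set c := normal_peak sigma * _.
set N := (Num.truncn _).+1.
set E := [set x | _].
have c0 : 0 < c by rewrite mulr_gt0 ?expR_gt0 ?normal_peak_gt0 ?gt_eqF.
have N0 : (0 < N%:R :> R) by rewrite ltr0n.
set δ := (N%:R)^-1.
have δ0 : 0 < δ by rewrite invr_gt0.
have δN : δ * N%:R = 1 by rewrite mulVf ?gt_eqF.
set a := mu - eps - 2.
pose u (i : nat) := a - 1 + i%:R * δ.
pose I (i : nat) := `[u i, (u i + δ)%R[%classic.
pose Bs (i : 'I_N) := X 0%N @^-1` I i `&` X 1%N @^-1` I i.
have hu (i : 'I_N) : a - 1 <= u i /\ u i + δ <= a.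
  split; first by rewrite /u lerDl mulr_ge0 // ltW.
  have : i.+1%:R * δ <= N%:R * δ by rewrite ler_wpM2r ?(ltW δ0) // ler_nat.
  rewrite [N%:R * δ]mulrC δN.
  rewrite /u -natr1 mulrDl mul1r; generalize (i%:R * δ) => t; lra.
have mI i : measurable (I i) by exact: measurable_itv.
have mB i : measurable (Bs i).
  by apply: measurableI; apply: measurable_funPTI.
have sub : \big[setU/set0]_(i < N) Bs i `<=` E.
  elim/big_ind : _ => [|A1 A2 h1 h2|i _]; first exact: sub0set.
    by move=> x [/h1|/h2].
  move=> x [h0 h1].
  move: h0 h1; rewrite /I /= !in_itv /= => /andP[a1 a2] /andP[b1 b2].
  have [h3 h4] := hu i.
  exists 2%N; split; first by rewrite k2.
  rewrite /sample_sd /sample_mean !big_ord_recr !big_ord0 /= !add0r.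
  rewrite divff ?pnatr_eq0 // powRr1 ?ler0n //.
  have hr : Num.sqrt (k%:R - 1 : R) <= N%:R.
    have hN := truncnS_gt (Num.sqrt (k%:R : R)).  rewrite -/N in hN.
    apply: (le_trans _ (ltW hN)).
    by rewrite ler_sqrt ?ler0n //; lra.
  have hd2 : (X 0%N x - X 1%N x) ^+ 2 <= δ ^+ 2.
    have hh : -δ <= X 0%N x - X 1%N x <= δ by apply/andP; split; lra.
    move/andP: hh => [hh1 hh2]; nra.
  have heq : 2^-1 * ((X 0%N x - 2^-1 * (X 0%N x + X 1%N x)) ^+ 2 +
      (X 1%N x - 2^-1 * (X 0%N x + X 1%N x)) ^+ 2) = (X 0%N x - X 1%N x) ^+ 2 / 4.
    by field.
  rewrite heq.
  have hsd : Num.sqrt ((X 0%N x - X 1%N x) ^+ 2 / 4) <= δ.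
    rewrite -(ger0_norm (ltW δ0)) -sqrtr_sqr ler_sqrt ?sqr_ge0 //.
    have := sqr_ge0 δ; lra.
  have hp : Num.sqrt ((X 0%N x - X 1%N x) ^+ 2 / 4) * Num.sqrt (k%:R - 1 : R) <= 1.
    by have := ler_pM (sqrtr_ge0 _) (sqrtr_ge0 _) hsd hr; rewrite δN.
  apply: (le_lt_trans (lerD (lexx (2^-1 * (X 0%N x + X 1%N x))) hp)).
  rewrite /a in h3 h4; lra.
have tB : trivIset setT Bs.
  move=> i j _ _ [x [[hi0 _] [hj0 _]]].
  move: hi0 hj0; rewrite /I /= !in_itv /= /u => /andP[a1 a2] /andP[b1 b2].
  have lt1 : i%:R * δ < j.+1%:R * δ by rewrite -natr1 mulrDl mul1r; lra.
  have lt2 : j%:R * δ < i.+1%:R * δ by rewrite -natr1 mulrDl mul1r; lra.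
  rewrite ltr_pM2r // ltr_nat in lt1.
  rewrite ltr_pM2r // ltr_nat in lt2.
  by apply/val_inj/anti_leq; rewrite -ltnS lt1 /= -ltnS; exact: lt2.
apply: (@le_trans _ _ (P (\big[setU/set0]_(i < N) Bs i))); last first.
  apply: le_measure => //; rewrite inE.
    exact: bigsetU_measurable.
  exact: (mE _ _ (fun j => Num.sqrt ((k%:R) `^ (2 / j%:R) - 1))).
rewrite (measure_semi_additive_ord P) //; last exact: bigsetU_measurable.
apply: (@le_trans _ _ (\sum_(i < N) ((c * δ) ^+ 2)%:E)%E).
  rewrite sumEFin sumr_const card_ord lee_fin.
  by rewrite -mulr_natr [(c * δ) ^+ 2]exprMn [δ ^+ 2]expr2 -!mulrA δN mulr1.
apply: lee_sum => i _.
have h := indep2 (I i) (I i) (mI i) (mI i) indep.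
apply: (@le_trans _ _ (P (X 0%N @^-1` I i) * P (X 1%N @^-1` I i))%E); last first.
  by rewrite -h; exact: le_refl.
rewrite (hnorm 0%N _ (mI i)) (hnorm 1%N _ (mI i)).
have hI : ((c * δ)%:E <= normal_prob mu sigma (I i))%E.
  apply: normal_lb; [by rewrite gt_eqF | exact: ltW | ].
  move=> x /andP[h1 h2]; have [h3 h4] := hu i; rewrite ler_norml.
  rewrite /a in h3 h4; apply/andP; split; lra.
rewrite expr2 EFinM; apply: lee_pmul => //; by rewrite lee_fin mulr_ge0 // ltW.
Qed.
End helpers.

Theorem proposition2 (R : realType) (d : measure_display) (T : measurableType d)
  (P : probability T R) (X : nat -> {RV P >-> R}) (mu sigma : R) :
  0 < sigma ->
  mutually_independent X ->
  (forall n, has_normal_law (X n) mu sigma) ->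
  forall eps : R, 0 < eps ->
  ((fun k : nat =>
      (k%:R)%:E *
       (P [set x | exists j : nat, (2 <= j <= k)%N /\
            (sample_mean X j x + sample_sd X j x *
              Num.sqrt ((k%:R) `^ (2 / j%:R) - 1) < mu - eps)%R]))%E
   @ \oo --> +oo%E).
Proof.
move=> sig0 indep hnorm eps eps0.
set c := normal_peak sigma * expR (- (eps + 3) ^+ 2 / (sigma ^+ 2 *+ 2)).
have c0 : 0 < c by rewrite mulr_gt0 ?expR_gt0 ?normal_peak_gt0 ?gt_eqF.
have c20 : 0 < c ^+ 2 by rewrite exprn_gt0.
apply/cvgeyPge => A.
pose M := (2 * (`|A| + 1) / c ^+ 2) ^+ 2.
near=> k.
have k2 : (2 <= k)%N by near: k; exact: nbhs_infty_ge.
have kM : M <= k%:R by near: k; exact: nbhs_infty_ger.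
have hl := @lbk R d T P X mu sigma eps k sig0 indep hnorm eps0 k2.
apply: (le_trans _ (lee_pmul _ _ (lexx (k%:R)%:E) hl)); rewrite ?lee_fin ?ler0n ?divr_ge0 ?ltW //.

rewrite -/c.
set q := Num.sqrt (k%:R : R).
set N := (Num.truncn q).+1.
have N0 : 0 < N%:R :> R by rewrite ltr0n.
have hN : N%:R <= q + 1 by rewrite /N -natr1 lerD2r truncn_le sqrtr_ge0.
have hq1 : 1 <= q.
  have : Num.sqrt 1 <= q by rewrite /q ler_sqrt ?ler0n // ler1n ltnW.
  by rewrite sqrtr1.
have hk : k%:R = q ^+ 2 by rewrite sqr_sqrtr ?ler0n.
set t := 2 * (`|A| + 1) / c ^+ 2.
have t0 : 0 <= t by rewrite /t divr_ge0 ?ltW // mulr_ge0 // addr_ge0.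
have ht : t <= q by rewrite -(ger0_norm t0) -sqrtr_sqr /q ler_sqrt ?ler0n.
have hct : c ^+ 2 * t = 2 * (`|A| + 1) by rewrite /t mulrCA divff ?gt_eqF // mulr1.
rewrite mulrA ltr_pdivlMr // hk.
have hA := ler_norm A. have hA0 := normr_ge0 A.
have p1 : 0 <= (`|A| - A) * N%:R by apply: mulr_ge0; lra.
have p2 : 0 <= `|A| * (2 * q - N%:R) by apply: mulr_ge0; lra.
have p3 : 0 <= c ^+ 2 * (q * (q - t)).
  apply: mulr_ge0; first exact: ltW.
  by apply: mulr_ge0; lra.
have p4 : c ^+ 2 * t * q = 2 * (`|A| + 1) * q by rewrite hct.
nra.
Unshelve. all: end_near.
Qed.
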